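(* Let $q=p^h$ with $p>3$ prime, $q\ge 7$, and let $X,T$ be positive integers with $X+T\ge 3(q+2)$. Let $\mathcal{E}$ be an $\mathbb{F}_{q^2}$-maximal elliptic curve over $\mathbb{F}_{q^2}$ with affine equation $y^2=f(x)$, $\deg f=3$, and $\gamma=\#\{z\in\mathbb{F}_{q^2}: f(z)=0\}$. Define $$\mathcal{R}^{\mathcal{E}}_{\max}=\frac{L^{\mathcal{E}}}{L^{\mathcal{E}}+X+T+8},\qquad L^{\mathcal{E}}=2\left\lfloor\frac{\#\mathcal{E}(\mathbb{F}_{q^2})-(X+T+\gamma+9)}{4}\right\rfloor-1,$$ $$\mathcal{R}^{\mathcal{H}_q}_{\max}=\frac{L^{\mathcal{H}}}{L^{\mathcal{H}}+X+T+3q^2-q-2},\qquad L^{\mathcal{H}}=mq-\frac{q(q-1)}{2},\quad m=\left\lfloor\frac{q^3-3q^2+q+1-(X+T)}{2q}\right\rfloor.$$ Then $\mathcal{R}^{\mathcal{H}_q}_{\max}>\mathcal{R}^{\mathcal{E}}_{\max}$.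
   Context: An elliptic curve over $\mathbb{F}_{q^2}$ is $\mathbb{F}_{q^2}$-maximal if it has $q^2+1+2q$ rational points. $\mathcal{R}^{\mathcal{E}}_{\max}$ is the maximal rate of the known $X$-secure $T$-private PIR construction from the elliptic curve $\mathcal{E}$ (rate $L/(L+X+T+8)$), and $\mathcal{R}^{\mathcal{H}_q}_{\max}$ is the maximal rate of the PIR construction from the Hermitian curve $X^{q+1}=Y^q+Y$ over $\mathbb{F}_{q^2}$ (rate $L/N$ with $N=L+X+T+3q^2-q-2$). *)

(* Defs.v *)
From mathcomp Require Import all_boot all_order all_algebra all_field.
Set Implicit Arguments. Unset Strict Implicit. Unset Printing Implicit Defensive.
Import Order.TTheory GRing.Theory Num.Theory.
Local Open Scope ring_scope.

(* Number of F_K-rational points of the (projective) elliptic curve y^2 = f(x):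
   the affine solutions plus the single point at infinity. *)
Definition ell_points (K : finFieldType) (f : {poly K}) : nat :=
  #|[set xy : K * K | xy.2 ^+ 2 == f.[xy.1]]|.+1.

Definition nroots (K : finFieldType) (f : {poly K}) : nat :=
  #|[set z : K | root f z]|.

Definition LE (NE X T gam : nat) : int :=
  2 * ((NE%:Z - (X + T + gam + 9)%:Z) %/ 4)%Z - 1.

Definition RE_max (NE X T gam : nat) : rat :=
  (LE NE X T gam)%:~R / ((LE NE X T gam)%:~R + (X + T + 8)%:R).

Definition mH (q X T : nat) : int :=
  (((q ^ 3 + q + 1)%:Z - (3 * q ^ 2)%:Z - (X + T)%:Z) %/ (2 * q)%:Z)%Z.

Definition LH (q X T : nat) : int :=
  mH q X T * q%:Z - ((q * (q - 1)) %/ 2)%:Z.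

Definition RH_max (q X T : nat) : rat :=
  (LH q X T)%:~R /
  ((LH q X T)%:~R + (X + T)%:R + (3 * q ^ 2)%:R - q%:R - 2).

(* Main.v *)
Require Import Defs.
From mathcomp Require Import all_boot all_order all_algebra all_field.
From mathcomp Require Import zify ring.
Import Order.TTheory GRing.Theory Num.Theory.
Local Open Scope ring_scope.
Lemma polyP (r s : int) : 0 <= r -> 0 <= s ->
  forall q, q = 8 + r -> 0 < s*(q*q*q-2*q*q-3*q+2) + 3*q*q*q-19*q*q-18*q+8.
Proof.
move=> hr hs q hq.
have e : s*(q*q*q-2*q*q-3*q+2) + 3*q*q*q-19*q*q-18*q+8 =
  s*(r*r*r + 22*r*r + 157*r + 362) + (3*r*r*r + 53*r*r + 254*r + 184).
  rewrite hq; ring.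
rewrite e.
have h1 : 0 <= r*r by apply: mulr_ge0.
have h2 : 0 <= r*r*r by apply: mulr_ge0.
have h3 : 0 <= s*(r*r*r + 22*r*r + 157*r + 362) by apply: mulr_ge0 => //; lia.
lia.
Qed.

Lemma key (q S g k mm t : int) : 7 <= q -> 3*q+6 <= S -> 0 <= g -> g <= q*q ->
  4*k <= q*q+2*q+1 - S - g - 9 -> q*q+2*q+1 - S - g - 9 < 4*k + 4 ->
  q*q*q+q+1-3*q*q-S - 2*q < 2*q*mm -> 2*t <= q*(q-1) ->
  [/\ 0 < (2*k-1)+S+8, 0 < (mm*q - t) + S + 3*q*q - q - 2 &
   (2*k-1)*(S + 3*q*q - q - 2) < (mm*q-t)*(S+8)].
Proof.
move=> h1 h2 h3 h4 h5 h6 h7 h8.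
set a := 2*k-1. set b := mm*q - t.
set D1 := S + 3*q*q - q - 2. set D2 := S + 8.
have hqq : 7*q <= q*q by apply: ler_wpM2r; lia.
have hqqq : 7*(q*q) <= q*q*q by rewrite [q*q*q]mulrC; apply: ler_wpM2r; lia.
have hU : 2*a <= q*q+2*q-S-10 by rewrite /a; lia.
have hL : q*q*q-4*q*q+2-S <= 2*b by rewrite /b; lia.
have hD1 : 0 < D1 by rewrite /D1; lia.
have hD2 : 0 < D2 by rewrite /D2; lia.
split; first by rewrite /a; lia.
  by rewrite /b; lia.
have [[eq7 eS]|hne] : (q = 7 /\ S = 27) \/ ~ (q = 7 /\ S = 27) by lia.
  rewrite /a /b /D1 /D2; move: h5 h7 h8; rewrite eq7 eS => h5 h7 h8; lia.
have i1 : 2*a*D1 <= (q*q+2*q-S-10)*D1 by apply: ler_wpM2r => //; lia.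
have i2 : (q*q*q-4*q*q+2-S)*D2 <= 2*b*D2 by apply: ler_wpM2r => //; lia.
have i3 : (q*q+2*q-S-10)*D1 < (q*q*q-4*q*q+2-S)*D2.
  rewrite -subr_gt0.
  have e : (q*q*q-4*q*q+2-S)*D2 - (q*q+2*q-S-10)*D1 =
     (S-3*q-6)*(q*q*q-2*q*q-3*q+2) + 3*q*q*q-19*q*q-18*q+8.
    rewrite /D1 /D2; ring.
  rewrite e.
  have [eq7|h9] : q = 7 \/ 8 <= q by lia.
  - rewrite eq7. lia.
  - apply: (polyP (q - 8) (S-3*q-6)); [lia|lia|ring].
have : 2*(a*D1) < 2*(b*D2) by rewrite !mulrA; lia.
lia.
Qed.

Lemma ratfrac (a b u v : int) : 0 < a + u -> 0 < b + v -> a * v < b * u ->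
  a%:~R / (a + u)%:~R < b%:~R / (b + v)%:~R :> rat.
Proof.
move=> h1 h2 h3.
have p1 : 0 < (a + u)%:~R :> rat by rewrite ltr0z.
have p2 : 0 < (b + v)%:~R :> rat by rewrite ltr0z.
rewrite ltr_pdivrMr // mulrAC ltr_pdivlMr // -!intrM ltr_int.
have -> : a * (b + v) = a * b + a * v by ring.
have -> : b * (a + u) = a * b + b * u by ring.
by rewrite ltrD2l.
Qed.

Theorem proposition4p8
  (p h : nat) (K : finFieldType) (f : {poly K}) (X T : nat) :
  prime p -> (3 < p)%N ->
  let q := (p ^ h)%N in
  (7 <= q)%N ->
  (0 < X)%N -> (0 < T)%N -> (3 * (q + 2) <= X + T)%N ->
  #|K| = (q ^ 2)%N ->
  size f = 4%N ->
  coprimep f f^`() ->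
  ell_points f = (q ^ 2 + 1 + 2 * q)%N ->
  RH_max q X T > RE_max (ell_points f) X T (nroots f).
Proof.
move=> _ _ q hq _ _ hS hK _ _ ->.
have hg : (nroots f <= q ^ 2)%N by rewrite /nroots -hK max_card.
move: (nroots f) hg => g hg.
rewrite /RH_max /RE_max /LE /LH /mH.
have e2 : (q ^ 2 = q * q)%N by rewrite !expnS expn0 muln1.
have e3 : (q ^ 3 = q * q * q)%N by rewrite !expnS expn0 muln1 mulnA.
rewrite e2 e3. rewrite e2 in hg.
set k := ((_ - _) %/ 4)%Z.
set mm := ((_ - _ - _) %/ _)%Z.
set t := ((q * (q - 1)) %/ 2)%N.
have ht : (t * 2 <= q * (q - 1))%N by apply: leq_divM.
have ek := divz_eq ((q * q + 1 + 2 * q)%N%:Z - (X + T + g + 9)%N%:Z) 4.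
have ek1 := @modz_ge0 ((q * q + 1 + 2 * q)%N%:Z - (X + T + g + 9)%N%:Z) 4 isT.
have ek2 := @ltz_pmod ((q * q + 1 + 2 * q)%N%:Z - (X + T + g + 9)%N%:Z) 4 isT.
rewrite -/k in ek.
have q0 : 0 < (2 * q)%N%:Z by lia.
have q1 : (2 * q)%N%:Z != 0 by lia.
have em := divz_eq ((q * q * q + q + 1)%N%:Z - (3 * (q * q))%N%:Z - (X + T)%N%:Z) (2 * q)%N%:Z.
have em1 := @modz_ge0 ((q * q * q + q + 1)%N%:Z - (3 * (q * q))%N%:Z - (X + T)%N%:Z) _ q1.
have em2 := @ltz_pmod ((q * q * q + q + 1)%N%:Z - (3 * (q * q))%N%:Z - (X + T)%N%:Z) _ q0.
rewrite -/mm in em.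
have [] := @key q%:Z (X+T)%N%:Z g%:Z k mm t%:Z.
- lia.
- lia.
- lia.
- lia.
- lia.
- lia.
- nia.
- nia.
move=> d1 d2 c.
set D1 := (_ + (X + T + 8)%:R).
set D2 := (_ + _ + _ - _ - 2).
have -> : D1 = (2*k-1 + (X+T+8)%N%:Z)%:~R :> rat.
  by rewrite /D1 [RHS]intrD.
have -> : D2 = ((mm*q%:Z-t%:Z) + ((X+T)%N%:Z + (3*(q*q))%N%:Z - q%:Z - 2))%:~R :> rat.
  rewrite /D2; ring.
apply: ratfrac; lia.
Qed.
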